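(* Let $(k,p,\mathcal{A}_{k,p})$ be one of the following: $k=1,p=3$: $\mathcal{A}_{1,3}=\{3r,3r+1:0\le r\le16\}\setminus\{7,16,24,25,34,43\}$; $k=1,p=5$: $\mathcal{A}_{1,5}=(\{5r,5r+1,5r+2,5r+3:0\le r\le 9\}\cup\{50\})\setminus\{23,48\}$; $k=1,p=7$: $\mathcal{A}_{1,7}=([0,50]\cap\mathbb{Z})\setminus\{6,13,20,27,34,41,47,48\}$; $k=2,p=5$: $\mathcal{A}_{2,5}=(\{5r,5r+1,5r+2:0\le r\le 8\}\cup\{45,50\})\setminus\{21,22\}$; $k=2,p=7$: $\mathcal{A}_{2,7}=([0,50]\cap\mathbb{Z})\setminus(\{7r-1,7r-2:1\le r\le 7\}\cup\{45,46\})$; $k=3,p=5$: $\mathcal{A}_{3,5}=\{0,1,5,6,10,11,15,25,26,30,31,35,36,40,50\}$; $k=3,p=7$: $\mathcal{A}_{3,7}=\{7r,7r+1,7r+2,7r+3:0\le r\le 5\}\cup\{42,49,50\}$; $k=4,p=7$: $\mathcal{A}_{4,7}=\{7r,7r+1,7r+2:0\le r\le 4\}\cup\{35,36,49,50\}$; $k=5,p=7$: $\mathcal{A}_{5,7}=\{0,1,7,8,14,15,21,22,28,49,50\}$. Let $n\ge 2k$ and $a\in\mathcal{A}_{k,p}$. If $p\mid\prod_{i=1}^k(a+n-k+i)$ and $p\nmid a_0a_n$, then $f_{n,a}(x)$ has no factor of degree $k$ in $\mathbb{Q}[x]$. If $p\mid\prod_{i=1}^k(n-k+i)(a+n-k+i)$,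 then $L_n^{(a)}(x)$ has no factor of degree $k$ in $\mathbb{Q}[x]$.
   Context: For integers $n\ge 1$, $a\ge 0$ and integers $a_0,\dots,a_n$, $f_{n,a}(x)=\sum_{j=0}^{n} a_j\frac{x^j}{(j+a)!}$. The generalised Laguerre polynomial is $L_n^{(\alpha)}(x)=\sum_{j=0}^{n}\frac{(n+\alpha)(n-1+\alpha)\cdots(j+1+\alpha)}{(n-j)!\,j!}(-x)^j$. *)

(* Defs.v *)
From HB Require Import structures.
From mathcomp Require Import all_boot all_order all_algebra.
Set Implicit Arguments. Unset Strict Implicit. Unset Printing Implicit Defensive.
Import Order.TTheory GRing.Theory Num.Theory.
Local Open Scope ring_scope.

Definition fna (n a : nat) (c : nat -> int) : {poly rat} :=
  \sum_(j < n.+1) (((c j)%:~R / ((j + a)`!)%:R) *: 'X^j).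

Definition laguerre (n a : nat) : {poly rat} :=
  \sum_(j < n.+1)
     (((\prod_(j.+1 <= i < n.+1) (i + a)%:R) / ((n - j)`!)%:R / (j`!)%:R)
        *: ('X ^+ j * (-1) ^+ j)).

Definition has_factor_deg (k : nat) (P : {poly rat}) : Prop :=
  exists g : {poly rat}, size g = k.+1 /\ (g %| P)%R.

Local Open Scope nat_scope.

Definition Aset (k p : nat) : pred nat := fun a =>
  match k, p with
  | 1, 3 => (a \in [seq 3*r | r <- iota 0 17] ++ [seq 3*r+1 | r <- iota 0 17])
            && (a \notin [:: 7; 16; 24; 25; 34; 43])
  | 1, 5 => (a \in [seq 5*r | r <- iota 0 10] ++ [seq 5*r+1 | r <- iota 0 10]
                 ++ [seq 5*r+2 | r <- iota 0 10] ++ [seq 5*r+3 | r <- iota 0 10]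
                 ++ [:: 50])
            && (a \notin [:: 23; 48])
  | 1, 7 => (a <= 50) && (a \notin [:: 6; 13; 20; 27; 34; 41; 47; 48])
  | 2, 5 => (a \in [seq 5*r | r <- iota 0 9] ++ [seq 5*r+1 | r <- iota 0 9]
                 ++ [seq 5*r+2 | r <- iota 0 9] ++ [:: 45; 50])
            && (a \notin [:: 21; 22])
  | 2, 7 => (a <= 50)
            && (a \notin [seq 7*r-1 | r <- iota 1 7] ++ [seq 7*r-2 | r <- iota 1 7]
                         ++ [:: 45; 46])
  | 3, 5 => a \in [:: 0; 1; 5; 6; 10; 11; 15; 25; 26; 30; 31; 35; 36; 40; 50]
  | 3, 7 => a \in [seq 7*r | r <- iota 0 6] ++ [seq 7*r+1 | r <- iota 0 6]
                 ++ [seq 7*r+2 | r <- iota 0 6] ++ [seq 7*r+3 | r <- iota 0 6]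
                 ++ [:: 42; 49; 50]
  | 4, 7 => a \in [seq 7*r | r <- iota 0 5] ++ [seq 7*r+1 | r <- iota 0 5]
                 ++ [seq 7*r+2 | r <- iota 0 5] ++ [:: 35; 36; 49; 50]
  | 5, 7 => a \in [:: 0; 1; 7; 8; 14; 15; 21; 22; 28; 49; 50]
  | _, _ => false
  end.

Definition admissible (k p : nat) : bool :=
  (k, p) \in [:: (1,3); (1,5); (1,7); (2,5); (2,7); (3,5); (3,7); (4,7); (5,7)].

(* Main.v *)
Require Import Defs.
From HB Require Import structures.
From mathcomp Require Import all_boot all_order all_algebra.
From mathcomp Require Import zify ring.
Set Implicit Arguments. Unset Strict Implicit. Unset Printing Implicit Defensive.
Import Order.TTheory GRing.Theory Num.Theory.
Fixpoint lfact p m := if m is m'.+1 then logn p m'.+1 + lfact p m' else 0.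
Lemma lfactE p m : lfact p m = logn p m`!.
Proof. elim: m => [|m IH] /=; first by rewrite logn1. by rewrite IH factS lognM // fact_gt0. Qed.

Lemma legendre_aux p m E : prime p ->
  (p-1) * \sum_(1 <= e < E.+1) m %/ p^e + m %/ p^E <= m.
Proof.
move=> pp; elim: E => [|E IH]; first by rewrite big_geq // expn0 divn1 muln0.
rewrite big_nat_recr //= expnSr divnMA.
have := leq_trunc_div (m %/ p ^ E) p.
have p1 : 1 < p by apply: prime_gt1.
move: IH; set S := \sum_(_ <= _ < _) _; set y := m %/ p ^ E; set x := y %/ p.
move=> IH H.
have -> : (p - 1) * (S + x) + x = (p-1) * S + x * p.
  rewrite mulnDr -addnA; congr (_ + _).
  by rewrite -[in RHS](subnK (ltnW p1)) mulnDr muln1 mulnC.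
by apply: leq_trans IH; rewrite leq_add2l.
Qed.

Lemma legendre p m : prime p -> (p-1) * logn p m`! <= m.
Proof. move=> pp; rewrite logn_fact //; exact: leq_trans (leq_addr _ _) (legendre_aux m m pp). Qed.

Definition chk p k a := all (fun t => k * (lfact p (t + a) - lfact p a) < t) (iota 1 (k*a)).

Lemma Acond p k a : prime p -> k.+1 < p -> chk p k a ->
  forall t, 0 < t -> k * (logn p (t+a)`! - logn p a`!) < t.
Proof.
move=> pp kp /allP H t t0.
case: (leqP t (k*a)) => tb.
  by have := H t; rewrite mem_iota !lfactE; apply; lia.
have := legendre (t+a) pp.
set L := logn p _; set L0 := logn p _.
have : L - L0 <= L by apply: leq_subr.
set X := L - L0 => XL HL.
have : (p-1) * (k * X) <= k * (t + a).
  rewrite mulnCA; apply: leq_mul => //; apply: leq_trans HL; rewrite leq_mul2l XL orbT //.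
nia.
Qed.

Local Open Scope ring_scope.

Definition vz (p : nat) (z : int) : nat := logn p `|z|%N.

Lemma vz_dvd p (z : int) : ((p ^ vz p z)%:Z %| z)%Z.
Proof. by rewrite dvdzE absz_nat /vz pfactor_dvdnn. Qed.

Lemma vz_le p e (z : int) : prime p -> z != 0 -> ((p ^ e)%:Z %| z)%Z -> (e <= vz p z)%N.
Proof.
move=> pp z0; rewrite dvdzE absz_nat /vz -pfactor_dvdn //.
by rewrite absz_gt0.
Qed.

Lemma vzM p (z w : int) : z != 0 -> w != 0 -> vz p (z * w) = (vz p z + vz p w)%N.
Proof. by move=> z0 w0; rewrite /vz abszM lognM // absz_gt0. Qed.

Lemma dvdz_pow_mul p e (z w : int) : (e <= vz p z + vz p w)%N -> ((p ^ e)%:Z %| z * w)%Z.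
Proof.
move=> H; apply: (@dvdz_trans ((p ^ (vz p z + vz p w))%:Z)).
  by rewrite dvdzE !absz_nat dvdn_exp2l.
by rewrite expnD PoszM dvdz_mul // vz_dvd.
Qed.

Section Extremal.
Variables (p k : nat).
Definition W (P : {poly int}) i := (k * vz p P`_i + i)%N.

Lemma extremal (P : {poly int}) : P != 0 -> exists i,
  [/\ P`_i != 0, forall j, P`_j != 0 -> (W P i <= W P j)%N &
      forall j, (i < j)%N -> P`_j != 0 -> (W P i < W P j)%N].
Proof.
move=> P0.
have exS : exists w, [exists j : 'I_(size P), (P`_j != 0) && (W P j == w)].
  exists (W P (size P).-1); apply/existsP.
  have sz : ((size P).-1 < size P)%N by rewrite prednK // size_poly_gt0.
  exists (Ordinal sz) => /=; rewrite eqxx andbT -lead_coefE lead_coef_eq0 //.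
case: (ex_minnP exS) => m /existsP [j0 /andP [j0nz /eqP j0m]] minm.
have exI : exists i, (P`_i != 0) && (W P i == m) by exists j0; rewrite j0nz j0m eqxx.
have bI : forall i, (P`_i != 0) && (W P i == m) -> (i <= size P)%N.
  move=> i /andP [nz _]; apply: ltnW; rewrite ltnNge; apply/negP => H.
  by move: nz; rewrite nth_default.
case: (ex_maxnP exI bI) => i /andP [inz /eqP im] maxi.
exists i; split => //.
  move=> j jnz; rewrite im; apply: minm; apply/existsP.
  have jl : (j < size P)%N.
    rewrite ltnNge; apply/negP => H; by move: jnz; rewrite nth_default.
  by exists (Ordinal jl); rewrite /= jnz eqxx.
move=> j ij jnz.
have jl : (j < size P)%N.
  rewrite ltnNge; apply/negP => H; by move: jnz; rewrite nth_default.
have : (m <= W P j)%N by apply: minm; apply/existsP; exists (Ordinal jl); rewrite /= jnz eqxx.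
rewrite leq_eqVlt => /orP [/eqP mj|]; last by rewrite im.
have := maxi j; rewrite jnz -mj eqxx /= => /(_ isT); rewrite leqNgt ij //.
Qed.
End Extremal.

Lemma coreA p k (h q : {poly int}) : prime p -> (0 < k)%N -> size h = k.+1 ->
  ~~ (p%:Z %| lead_coef h)%Z ->
  (h*q)`_0 != 0 ->
  (forall t, (0 < t)%N -> (h*q)`_t != 0 ->
     (k * vz p (h*q)`_0 < k * vz p (h*q)`_t + t)%N) ->
  ~~ (p%:Z %| h`_0)%Z.
Proof.
move=> pp k0 sh lh F0 H3.
have F0e : (h*q)`_0 = h`_0 * q`_0 by rewrite coef0M.
have h0 : h`_0 != 0 by move: F0; rewrite F0e; apply: contra => /eqP->; rewrite mul0r.
have q0 : q`_0 != 0 by move: F0; rewrite F0e; apply: contra => /eqP->; rewrite mulr0.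
have hnz : h != 0 by apply: contraNneq h0 => ->; rewrite coef0.
have qnz : q != 0 by apply: contraNneq q0 => ->; rewrite coef0.
have [i1 [hi1 hmin hmax]] := extremal p k hnz.
have [j1 [qj1 qmin qmax]] := extremal p k qnz.
set t := (i1 + j1)%N.
set V := (vz p h`_i1 + vz p q`_j1)%N.
have ND : ~~ ((p ^ V.+1)%:Z %| (h*q)`_t)%Z.
  have it : (i1 < t.+1)%N by rewrite ltnS leq_addr.
  rewrite coefM (bigD1 (Ordinal it)) //= (_ : (t - i1 = j1)%N); last by rewrite /t addKn.
  rewrite rpredDr.
    apply/negP => /(vz_le pp); rewrite vzM //.
    by move=> /(_ (mulf_neq0 hi1 qj1)); rewrite /V ltnn.
  apply: rpred_sum => -[i /= Hi] ine.
  have ii1 : i != i1 by apply: contra ine => /eqP ie; apply/eqP; apply: val_inj.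
  have [hz|hi] := eqVneq h`_i 0; first by rewrite hz mul0r rpred0.
  have [qz|qi] := eqVneq q`_(t - i) 0; first by rewrite qz mulr0 rpred0.
  apply: dvdz_pow_mul.
  have Hi' : (i <= t)%N by rewrite -ltnS.
  have key : (k * V < k * (vz p h`_i + vz p q`_(t - i)))%N.
    case: (ltngtP i1 i) => [lt|gt|eq]; last by move: ii1; rewrite eq eqxx.
      have A1 := hmax i lt hi.
      have A2 := qmin _ qi.
      move: A1 A2 Hi'; rewrite /W /V /t; clear -k; lia.
    have A1 := hmin i hi.
    have A2 := qmax (t - i)%N (ltac:(move: gt Hi'; rewrite /t; clear; lia)) qi.
    move: A1 A2 Hi'; rewrite /W /V /t; clear -k; lia.
  by move: key; rewrite ltn_mul2l => /andP[].
have t0 : t = 0%N.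
  case: (posnP t) => // tp; exfalso.
  have Ft : (h*q)`_t != 0 by apply: contraNneq ND => ->; rewrite dvdz0.
  have H := H3 t tp Ft.
  have vF : (vz p (h*q)`_t <= V)%N.
    rewrite leqNgt; apply/negP => lt; move/negP: ND; apply.
    apply: dvdz_trans (vz_dvd p _); by rewrite dvdzE !absz_nat dvdn_exp2l.
  have A1 := hmin 0%N h0.
  have A2 := qmin 0%N q0.
  have vF0 : vz p (h*q)`_0 = (vz p h`_0 + vz p q`_0)%N by rewrite F0e vzM.
  have kv : (k * vz p (h*q)`_t <= k * V)%N by rewrite leq_mul2l vF orbT.
  move: H A1 A2 kv tp; rewrite vF0 /W /V /t !mulnDr; clear -k; lia.
have i10 : i1 = 0%N by move: t0; rewrite /t; clear; lia.
have hk : h`_k != 0 by rewrite -[k]/(k.+1.-1) -sh -lead_coefE lead_coef_eq0.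
have := hmax k (ltac:(rewrite i10; exact: k0)) hk.
have vk : vz p h`_k = 0%N.
  apply/eqP; rewrite -leqn0 leqNgt; apply/negP => v1; move: lh.
  rewrite lead_coefE sh /=; apply/negP/negPn.
  apply: dvdz_trans (vz_dvd p _); by rewrite dvdzE !absz_nat -{1}(expn1 p) dvdn_exp2l.
rewrite /W i10 vk muln0 add0n addn0 => kv.
apply/negP => hd.
have v1 : (1 <= vz p h`_0)%N by apply: (vz_le pp h0); rewrite expn1.
move: kv v1; case: (vz p h`_0) => [|v] //= kv _.
by rewrite mulnS ltnNge leq_addr in kv.
Qed.

Lemma coreB p k (h q : {poly int}) : prime p -> size h = k.+1 ->
  ~~ (p%:Z %| h`_0)%Z -> ~~ (p%:Z %| lead_coef q)%Z ->
  (forall j, (j <= (size q).-1)%N -> (p%:Z %| (h*q)`_j)%Z) -> False.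
Proof.
move=> pp sh h0 lq H4.
have exS : exists j, ~~ (p%:Z %| q`_j)%Z by exists (size q).-1; rewrite -lead_coefE.
case: (ex_minnP exS) => j0 nj0 minj.
have jb : (j0 <= (size q).-1)%N by apply: minj; rewrite -lead_coefE.
have := H4 j0 jb; rewrite coefM big_ord_recl /= subn0 rpredDr.
  by rewrite dvdzE abszM Euclid_dvdM // -!dvdzE (negPf h0) (negPf nj0).
apply: rpred_sum => -[i /= Hi] _.
apply: dvdz_mull; apply/negPn/negP => nd.
have := minj _ nd; rewrite /bump /= => H; move: H Hi; clear; lia.
Qed.

Lemma no_factor p k (F : {poly int}) (g : {poly rat}) : prime p -> (0 < k)%N ->
  size g = k.+1 -> (g %| map_poly intr F)%R ->
  ~~ (p%:Z %| lead_coef F)%Z -> F`_0 != 0 ->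
  (forall t, (0 < t)%N -> F`_t != 0 -> (k * vz p F`_0 < k * vz p F`_t + t)%N) ->
  (forall j, (j <= size F - k.+1)%N -> (p%:Z %| F`_j)%Z) -> False.
Proof.
move=> pp k0 sg dg lF F0 H3 H4.
have [h [s s0 gE] [r Fe]] := dvdpP_rat_int dg.
have sh : size h = k.+1.
  move: sg; rewrite gE size_scale // size_map_inj_poly //; exact: intr_inj.
have hnz : h != 0 by rewrite -size_poly_gt0 sh.
have Fnz : F != 0 by apply: contraNneq F0 => ->; rewrite coef0.
have rnz : r != 0 by apply: contraNneq Fnz => rz; rewrite Fe rz mulr0.
have lh : ~~ (p%:Z %| lead_coef h)%Z.
  by apply: contra lF; rewrite Fe lead_coefM; apply: dvdz_mulr.
have lr : ~~ (p%:Z %| lead_coef r)%Z.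
  by apply: contra lF; rewrite Fe lead_coefM; apply: dvdz_mull.
subst F.
have h0 := coreA pp k0 sh lh F0 H3.
apply: (coreB pp sh h0 lr) => j jb; apply: H4.
rewrite size_mul // sh.
case: (size r) jb => [|m] jb /=; first by move: jb; rewrite leqn0 => /eqP ->.
by rewrite addnS subSS addKn.
Qed.

Lemma prod_ffact (b d : nat) : (\prod_(0 <= i < d) (i + b).+1 = (b + d) ^_ d)%N.
Proof.
elim: d => [|d IH]; first by rewrite big_geq // ffactn0.
by rewrite big_nat_recr //= IH addnS ffactSS mulnC addnC.
Qed.

Lemma ffact_dvd n m m' : (m <= m')%N -> (n ^_ m %| n ^_ m')%N.
Proof.
elim: m' => [|m' IH]; first by rewrite leqn0 => /eqP ->.
rewrite leq_eqVlt => /orP [/eqP -> //|]; rewrite ltnS => /IH H.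
by rewrite ffactnSr dvdn_mulr.
Qed.

Lemma prod_top (m k : nat) : (k <= m)%N ->
  (\prod_(1 <= i < k.+1) (m - k + i) = m ^_ k)%N.
Proof.
move=> km; rewrite big_add1 /= (eq_bigr (fun i => (i + (m - k)).+1)); last first.
  by move=> i _; rewrite addnS addnC.
by rewrite prod_ffact subnK.
Qed.

Lemma prod_lag (n a j : nat) : (j <= n)%N ->
  (\prod_(j.+1 <= i < n.+1) (i + a) = (n + a) ^_ (n - j))%N.
Proof.
move=> jn; rewrite big_add1 /= -{1}[j]add0n big_addn (eq_bigr (fun i => (i + (j + a)).+1)); last first.
  by move=> i _; rewrite addSn addnA.
by rewrite prod_ffact addnAC subnKC.
Qed.

Definition Fpoly n a (c : nat -> int) : {poly int} :=
  \poly_(j < n.+1) (c j * ((n + a) ^_ (n - j))%:Z).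

Lemma fact_ffact n a i : (i <= n)%N -> ((n + a)`! = (n + a) ^_ (n - i) * (i + a)`!)%N.
Proof.
move=> hi; rewrite -(@ffact_fact (n + a) (n - i)); last exact: leq_trans (leq_subr _ _) (leq_addr _ _).
congr (_ * _`!)%N; lia.
Qed.

Lemma Fpoly_fna n a c : map_poly intr (Fpoly n a c) = ((n+a)`!)%:R *: fna n a c.
Proof.
have -> : fna n a c = \poly_(j < n.+1) ((c j)%:~R / ((j + a)`!)%:R) by rewrite poly_def.
apply/polyP => i.
rewrite coef_map coefZ !coef_poly.
case: ltnP => hi; last by rewrite mulr0.
have F0 : (((i + a)`!)%:R : rat) != 0 by rewrite pnatr_eq0 -lt0n fact_gt0.
rewrite (fact_ffact a (hi : (i <= n)%N)) /= intrM -pmulrn natrM; field; exact F0.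
Qed.

Lemma Fpoly_lag n a :
  map_poly intr (Fpoly n a (fun j => (-1)^+j * ('C(n, j))%:Z)) = (n`!)%:R *: laguerre n a.
Proof.
have -> : laguerre n a = \poly_(j < n.+1)
     ((\prod_(j.+1 <= i < n.+1) (i + a)%:R) / ((n - j)`!)%:R / (j`!)%:R * (-1) ^+ j).
  rewrite /laguerre poly_def; apply: eq_bigr => j _.
  by rewrite [X in _ *: X]mulrC -polyC1 -polyCN -polyC_exp mul_polyC scalerA.
apply/polyP => i.
rewrite coef_map coefZ !coef_poly.
case: ltnP => hi; last by rewrite mulr0.
have hi' : (i <= n)%N by [].
have F1 : (((n - i)`!)%:R : rat) != 0 by rewrite pnatr_eq0 -lt0n fact_gt0.
have F2 : ((i`!)%:R : rat) != 0 by rewrite pnatr_eq0 -lt0n fact_gt0.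
rewrite -natr_prod prod_lag // -(bin_fact hi') /=.
rewrite !intrM -!pmulrn !natrM rmorphXn rmorphN1 /=.
field; rewrite F1 F2 //.
Qed.

Lemma vz_nat p (m : nat) : vz p m%:Z = logn p m.
Proof. by rewrite /vz absz_nat. Qed.

Lemma vz0_ndvd p (z : int) : ~~ (p%:Z %| z)%Z -> vz p z = 0%N.
Proof.
move=> nd; apply/eqP; rewrite -leqn0 leqNgt; apply/negP => v1; move/negP: nd; apply.
apply: dvdz_trans (vz_dvd p _); by rewrite dvdzE !absz_nat -{1}(expn1 p) dvdn_exp2l.
Qed.

Lemma red p k n a (c : nat -> int) : prime p -> (0 < k)%N -> (k.+1 < p)%N -> chk p k a ->
  (k <= n)%N -> ~~ (p%:Z %| c n)%Z -> ~~ (p%:Z %| c 0%N)%Z ->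
  (forall j, (j <= n - k)%N -> (p%:Z %| c j * ((n + a) ^_ (n - j))%:Z)%Z) ->
  forall g : {poly rat}, size g = k.+1 -> ~ (g %| map_poly intr (Fpoly n a c))%R.
Proof.
move=> pp k0 kp ch kn cn c0 H4 g sg dg.
have cn0 : c n != 0 by apply: contraNneq cn => ->; rewrite dvdz0.
have c00 : c 0%N != 0 by apply: contraNneq c0 => ->; rewrite dvdz0.
have En : c n.+1.-1 * ((n + a) ^_ (n - n.+1.-1))%:Z = c n.
  by rewrite /= subnn ffactn0 mulr1.
have Ennz : c n.+1.-1 * ((n + a) ^_ (n - n.+1.-1))%:Z != 0 by rewrite En.
have Dnz : forall t, (t <= n)%N -> ((n + a) ^_ (n - t))%:Z != 0.
  move=> t tn; rewrite (_ : 0 = (0%N)%:Z) // eqz_nat -lt0n ffact_gt0.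
  exact: leq_trans (leq_subr _ _) (leq_addr _ _).
have Dfact : forall t, (t <= n)%N -> (logn p ((n + a) ^_ (n - t)) + logn p (t + a)`! = logn p (n + a)`!)%N.
  move=> t tn; have hf : (0 < (n + a) ^_ (n - t))%N.
    by rewrite ffact_gt0; exact: leq_trans (leq_subr _ _) (leq_addr _ _).
  by rewrite (fact_ffact a tn) (lognM _ hf (fact_gt0 _)).
apply: (no_factor pp k0 sg dg).
- by rewrite /Fpoly lead_coef_poly // En.
- by rewrite /Fpoly coef_poly /= mulf_neq0 // Dnz.
- move=> t t0; rewrite /Fpoly !coef_poly /=.
  case: ltnP => tn; last by rewrite eqxx.
  have tn' : (t <= n)%N by [].
  move=> Ft.
  have ct : c t != 0 by apply: contraNneq Ft => ->; rewrite mul0r.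
  rewrite !vzM ?Dnz // (vz0_ndvd c0) !vz_nat add0n.
  have A := Acond pp kp ch t0.
  have D0 := Dfact 0%N (leq0n _).
  have Dt := Dfact t tn'.
  rewrite add0n in D0.
  move: A D0 Dt; clear; set X := logn p _; set Y := logn p _; set Z := logn p _.
  set U := logn p _; set V := logn p _; move=> A D0 Dt.
  have h1 : (Z <= V + (X - Y))%N by move: D0 Dt; clear; lia.
  have h2 : (k * Z <= k * V + k * (X - Y))%N by rewrite -mulnDr leq_mul2l h1 orbT.
  have h3 : (k * V <= k * (vz p (c t) + V))%N by rewrite leq_mul2l leq_addl orbT.
  move: A h2 h3; set P1 := (k * Z)%N; set P2 := (k * V)%N; set P3 := (k * (X - Y))%N;
  set P4 := (k * (_ + V))%N; clear; lia.
- move=> j; rewrite /Fpoly size_poly_eq // coef_poly subSS => jb.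
  have jn : (j < n.+1)%N by rewrite ltnS (leq_trans jb (leq_subr _ _)).
  rewrite jn; exact: H4.
Qed.
Local Close Scope ring_scope.

Ltac fin_case a :=
  let HA := fresh in let H1 := fresh in let H2 := fresh in
  move=> HA; split; [ by vm_compute | by [] | by [] | move: HA ];
  first [ move=> /andP [H1 H2]; move: H2; apply/implyP | move=> H1 ];
  try (have {H1} H1 : a \in iota 0 51 by rewrite mem_iota /= ltnS H1);
  move: a H1; apply/allP; vm_compute; reflexivity.

Lemma adm_facts k p a : admissible k p -> a \in Aset k p ->
  [/\ prime p, 0 < k, k.+1 < p & chk p k a].
Proof.
rewrite /admissible !inE.
do 8 (case/orP; first (move/eqP => [-> ->]; rewrite unfold_in /Aset; fin_case a)).
move/eqP => [-> ->]; rewrite unfold_in /Aset; fin_case a.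
Qed.

Lemma binid n a j : j <= n -> 'C(n, j) * (n + a) ^_ (n - j) = 'C(n + a, n - j) * n ^_ (n - j).
Proof.
move=> jn; apply/eqP; rewrite -(eqn_pmul2r (fact_gt0 (n - j))) -(bin_sub jn).
rewrite -mulnA [(n + a) ^_ _ * _]mulnC mulnA bin_ffact.
by rewrite mulnAC bin_ffact mulnC.
Qed.

Theorem corollary2p1 (k p n a : nat) (c : nat -> int) :
  admissible k p ->
  (2 * k <= n)%N ->
  a \in Aset k p ->
  ( (p %| \prod_(1 <= i < k.+1) (a + n - k + i))%N ->
    ~~ (p%:Z %| (c 0%N * c n)%R)%Z ->
    ~ has_factor_deg k (fna n a c) )
  /\
  ( (p %| \prod_(1 <= i < k.+1) ((n - k + i) * (a + n - k + i)))%N ->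
    ~ has_factor_deg k (laguerre n a) ).
Proof.
move=> adm hn ha; have [pp k0 kp ch] := adm_facts adm ha.
have kn : k <= n by move: hn; clear; lia.
have Ptop : \prod_(1 <= i < k.+1) (a + n - k + i) = (n + a) ^_ k.
  by rewrite addnC prod_top // (leq_trans kn (leq_addr _ _)).
have Ptop2 : \prod_(1 <= i < k.+1) (n - k + i) = n ^_ k by rewrite prod_top.
split.
- move=> hprod hc [g [sg dg]].
  have cn : ~~ (p%:Z %| c n)%Z by apply: contra hc; apply: dvdz_mull.
  have c0 : ~~ (p%:Z %| c 0%N)%Z by apply: contra hc; apply: dvdz_mulr.
  apply: (red pp k0 kp ch kn cn c0 _ sg); last first.
    by rewrite Fpoly_fna dvdpZr // pnatr_eq0 -lt0n fact_gt0.
  move=> j jb; apply: dvdz_mull; rewrite dvdzE !absz_nat.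
  apply: dvdn_trans hprod _; rewrite Ptop; apply: ffact_dvd.
  by move: jb kn; clear; lia.
- move=> hprod [g [sg dg]].
  set cl := fun j => ((-1)^+j * ('C(n, j))%:Z : int)%R.
  have nd1 : forall j, ~~ (p%:Z %| ((-1)^+j : int)%R)%Z.
    move=> j; rewrite dvdzE abszX /= exp1n ?absz_nat dvdn1.
    by apply/negP => /eqP p1; move: pp; rewrite p1.
  have cn : ~~ (p%:Z %| cl n)%Z by rewrite /cl binn mulr1.
  have c0 : ~~ (p%:Z %| cl 0%N)%Z by rewrite /cl bin0 mulr1.
  apply: (red pp k0 kp ch kn cn c0 _ sg); last first.
    by rewrite Fpoly_lag dvdpZr // pnatr_eq0 -lt0n fact_gt0.
  move=> j jb; rewrite /cl -mulrA; apply: dvdz_mull; rewrite -PoszM dvdzE !absz_nat.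
  have jn : j <= n by apply: leq_trans jb (leq_subr _ _).
  have kj : k <= n - j by move: jb kn; clear; lia.
  move: hprod; rewrite big_split /= Ptop2 Ptop Euclid_dvdM // => /orP [h1|h2].
    rewrite binid //; apply: dvdn_mull; exact: dvdn_trans h1 (ffact_dvd _ kj).
  apply: dvdn_mull; exact: dvdn_trans h2 (ffact_dvd _ kj).
Qed.
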